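(* There is an absolute constant $C$ such that for all $x,u\in\mathbb R$, \[\sup_{0<t\le1}K_t(x,u)\,\bigl(1-\eta((1+|x|)|x-u|)\bigr)\le C\,e^{R(x)}(1+|x|).\]
   Context: $R(x)=x^2/2$. $K_t(x,u)=\frac{e^{R(x)}}{\sqrt{1-e^{-2t}}}\exp\bigl(-\frac12\frac{(e^{-t}u-x)^2}{1-e^{-2t}}\bigr)$. $\eta\ge0$ is a fixed smooth function on $[0,\infty)$ with $\eta=1$ on $[0,1/2]$ and $\eta=0$ on $[1,\infty)$ (with $0\le\eta\le1$). *)

(* Defs.v *)
From Stdlib Require Import Reals.
From Coquelicot Require Import Coquelicot.
Open Scope R_scope.

Definition Rpot (x : R) : R := x ^ 2 / 2.

Definition K (t x u : R) : R :=
  exp (Rpot x) / sqrt (1 - exp (-2 * t)) *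
  exp (- / 2 * ((exp (- t) * u - x) ^ 2 / (1 - exp (- 2 * t)))).

Definition smooth (f : R -> R) : Prop :=
  forall (n : nat) (y : R), ex_derive (Derive_n f n) y.

Definition cutoff (eta : R -> R) : Prop :=
  smooth eta /\
  (forall y, 0 <= y <= / 2 -> eta y = 1) /\
  (forall y, 1 <= y -> eta y = 0) /\
  (forall y, 0 <= y -> 0 <= eta y <= 1).

(* Main.v *)
Require Import Defs.
From Coquelicot Require Import Coquelicot.
From Stdlib Require Import Reals Lra Psatz.
Open Scope R_scope.

Lemma key (r a X : R) : 0 < r -> 0 <= X -> (1 + X) * (Rabs a + r^2 * X) > / 6 ->
  / r * exp (- / 2 * (a ^ 2 / r ^ 2)) <= 12 * (1 + X).
Proof.
  intros Hr HX H.
  assert (Ha0 : 0 <= Rabs a) by apply Rabs_pos.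
  assert (Ea : a ^ 2 = Rabs a ^ 2) by (rewrite pow2_abs; reflexivity).
  assert (Hir : 0 < / r) by (apply Rinv_0_lt_compat; lra).
  destruct (Rle_or_lt ((1+X) * Rabs a) (/12)) as [C|C].
  - assert (Hr2 : r^2 * X * (1+X) > /12). { replace ((1 + X) * (Rabs a + r^2 * X)) with ((1+X)*Rabs a + r^2*X*(1+X)) in H by ring. lra. }
    assert (Hr3 : r * (1+X) > /12).
    { destruct (Rle_or_lt (r * (1+X)) (/12)) as [h|h]; [|lra].
      assert (r^2*X*(1+X) <= (r*(1+X))^2) by nra.
      assert ((r*(1+X))^2 <= (/12)^2) by (apply pow_incr; nra). lra. }
    assert (E1 : exp (- / 2 * (a ^ 2 / r ^ 2)) <= 1).
    { rewrite <- exp_0.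
      assert (0 <= a^2 / r^2).
      { unfold Rdiv; apply Rmult_le_pos; [nra| apply Rlt_le, Rinv_0_lt_compat; nra]. }
      destruct (Req_dec (- / 2 * (a ^ 2 / r ^ 2)) 0) as [e|e].
      rewrite e; lra. left; apply exp_increasing. lra. }
    assert (/ r < 12 * (1+X)).
    { apply (Rmult_lt_reg_r r). lra. rewrite Rinv_l by lra. nra. }
    assert (0 < exp (- / 2 * (a ^ 2 / r ^ 2))) by apply exp_pos.
    nra.
  - set (z := Rabs a / r).
    assert (Hz : a ^ 2 / r ^ 2 = z ^ 2) by (unfold z; rewrite Ea; field; lra).
    rewrite Hz.
    assert (Hez : z <= exp (/2 * z^2)).
    { pose proof (exp_ineq1_le (/2 * z^2)). nra. }
    assert (Hzp : 0 < z) by (unfold z; apply Rdiv_lt_0_compat; nra).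
    replace (- / 2 * z ^ 2) with (- (/2 * z^2)) by ring.
    rewrite exp_Ropp.
    assert (0 < exp (/ 2 * z ^ 2)) by apply exp_pos.
    assert (/ exp (/ 2 * z ^ 2) <= / z) by (apply Rinv_le_contravar; lra).
    assert (/ r * / z = / Rabs a) by (unfold z; field; nra).
    assert (/ Rabs a < 12 * (1+X)).
    { apply (Rmult_lt_reg_r (Rabs a)). nra. rewrite Rinv_l by nra. nra. }
    nra.
Qed.

Theorem mainTheorem8 (eta : R -> R) (Heta : cutoff eta) :
  exists C : R, forall x u : R, forall t : R, 0 < t <= 1 ->
    K t x u * (1 - eta ((1 + Rabs x) * Rabs (x - u)))
      <= C * exp (Rpot x) * (1 + Rabs x).
Proof.
  destruct Heta as [_ [H1 [_ H3]]].
  exists 12. intros x u t Ht.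
  set (y := (1 + Rabs x) * Rabs (x - u)).
  assert (Hy : 0 <= y) by (unfold y; pose proof (Rabs_pos x); pose proof (Rabs_pos (x-u)); nra).
  destruct (H3 y Hy) as [Hw0 Hw1].
  assert (HX : 0 <= Rabs x) by apply Rabs_pos.
  assert (HR : 0 < exp (Rpot x)) by apply exp_pos.
  set (E := exp (- t)).
  assert (HE2 : exp (-2 * t) = E^2) by (unfold E; simpl; rewrite Rmult_1_r, <- exp_plus; f_equal; ring).
  assert (HE1 : E < 1) by (unfold E; rewrite <- exp_0; apply exp_increasing; lra).
  assert (HE3 : / 3 <= E).
  { unfold E. pose proof exp_le_3. assert (exp (- (1)) <= exp (-t)).
    { destruct (Rle_lt_or_eq_dec t 1 (proj2 Ht)) as [e|e]. left; apply exp_increasing; lra. right; f_equal; lra. }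
    rewrite (exp_Ropp 1) in H0. assert (0 < exp 1) by apply exp_pos.
    assert (/3 <= / exp 1) by (apply Rinv_le_contravar; lra). lra. }
  set (s := 1 - E^2).
  assert (Hs : 0 < s) by (unfold s; nra).
  set (r := sqrt s).
  assert (Hr : 0 < r) by (apply sqrt_lt_R0; lra).
  assert (Hr2 : r ^ 2 = s) by (unfold r; simpl; rewrite Rmult_1_r; apply sqrt_sqrt; lra).
  set (a := exp (- t) * u - x).
  assert (HK : K t x u = exp (Rpot x) * (/ r * exp (- / 2 * (a ^ 2 / r ^ 2)))).
  { unfold K. rewrite HE2, Hr2. fold s. fold r. fold a. unfold Rdiv. ring. }
  assert (HKp : 0 <= / r * exp (- / 2 * (a ^ 2 / r ^ 2))).
  { apply Rmult_le_pos. apply Rlt_le, Rinv_0_lt_compat; lra. apply Rlt_le, exp_pos. }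
  rewrite HK.
  destruct (Rle_or_lt y (/2)) as [Cy|Cy].
  - rewrite (H1 y (conj Hy Cy)). nra.
  - assert (Hmain : (1 + Rabs x) * (Rabs a + r^2 * Rabs x) > / 6).
    { rewrite Hr2.
      assert (Hd : E * Rabs (x - u) <= Rabs a + s * Rabs x).
      { assert (E * Rabs (x-u) = Rabs (- (a + (1 - E) * x))).
        { replace (- (a + (1 - E) * x)) with (E * (x - u)) by (unfold a, E; ring). rewrite Rabs_mult, (Rabs_pos_eq E) by lra. reflexivity. }
        rewrite H, Rabs_Ropp.
        eapply Rle_trans. apply Rabs_triang. rewrite Rabs_mult, (Rabs_pos_eq (1-E)) by lra.
        assert (1 - E <= s) by (unfold s; nra). nra. }
      unfold y in Cy. pose proof (Rabs_pos (x-u)).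
      assert ((1 + Rabs x) * (E * Rabs (x - u)) <= (1 + Rabs x) * (Rabs a + s * Rabs x)) by (apply Rmult_le_compat_l; lra).
      assert (/3 * ((1 + Rabs x) * Rabs (x - u)) <= (1 + Rabs x) * (E * Rabs (x - u))) by nra.
      lra. }
    pose proof (key r a (Rabs x) Hr HX Hmain) as Hk.
    set (Q := / r * exp (- / 2 * (a ^ 2 / r ^ 2))) in *.
    assert (Q * (1 - eta y) <= Q) by nra.
    assert (exp (Rpot x) * (Q * (1 - eta y)) <= exp (Rpot x) * (12 * (1 + Rabs x))) by (apply Rmult_le_compat_l; lra).
    lra.
Qed.
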